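(* Let $\mathcal{D}\subset\mathbb{R}^n$ be a direction set and $\mathcal{D}^W\subset\mathcal{D}$ a grid direction set of width $W$ with directional resolution $d\theta<\pi/2$. Then for any smooth function $u:\mathbb{R}^n\to\mathbb{R}$ and point $x$, $$\lambda^h_{\mathcal{D}^W}u(x)-\lambda_{\mathcal{D}}u(x)=O\big((Wh)^2+d\theta\big).$$
   Context: A direction set $\mathcal{D}\subset\mathbb{R}^n$ spans $\mathbb{R}^n$, is symmetric ($d\in\mathcal{D}\Rightarrow-d\in\mathcal{D}$) and $0\notin\mathcal{D}$. A grid direction set $\mathcal{D}^W$ is a direction set consisting of vectors in $\mathbb{Z}^n$; its width $W$ is $\max_{v\in\mathcal{D}^W}\|v\|_\infty$. For smooth $u$, $\lambda_{\mathcal{D}}u(x)=\inf_{v\in\mathcal{D}}\frac{v^\intercal D^2u(x)v}{|v|^2}$. For $h>0$ and $v\in\mathcal{D}^W$, $D^h_{vv}u(x)=\frac{u(x+hv)-2u(x)+u(x-hv)}{h^2\|v\|^2}$, and $\lambda^h_{\mathcal{D}^W}u(x)=\min_{v\in\mathcal{D}^W}D^h_{vv}u(x)$. The directional resolution of $\mathcal{D}^W$ with respect to $\mathcal{D}$ is $d\theta=\max_{w\in\mathcal{D}}\min_{v\in\mathcal{D}^W}\cos^{-1}(\hat w^\intercal\hat v)$, where $\hat w=w/|w|$, $\hat v=v/|v|$ (the largest angle between a vector of $\mathcal{D}$ and its best approximation in $\mathcal{D}^W$). *)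

(* Defs.v *)
From HB Require Import structures.
From mathcomp Require Import all_boot all_order all_algebra.
From mathcomp Require Import all_classical all_reals all_analysis.
Set Implicit Arguments. Unset Strict Implicit. Unset Printing Implicit Defensive.
Import Order.TTheory GRing.Theory Num.Theory.
Import numFieldNormedType.Exports.
Local Open Scope classical_set_scope.
Local Open Scope ring_scope.

Section Defs.
Variables (R : realType) (n : nat).
Local Notation V := 'rV[R]_n.

(* Euclidean inner product and Euclidean norm |v| on R^n = 'rV_n.
   (The library norm `|v| on 'rV_n is the sup norm ||v||_oo.) *)
Definition dotp (v w : V) : R := \sum_(i < n) v ord0 i * w ord0 i.
Definition enorm (v : V) : R := Num.sqrt (dotp v v).

Definition iter_dderiv (vs : seq V) (f : V -> R) : V -> R :=
  foldr (fun v g => 'D_v g) f vs.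

Definition smooth (u : V -> R) : Prop :=
  forall (vs : seq V) (x : V), differentiable (iter_dderiv vs u) x.

Definition hess_quad (u : V -> R) (x v : V) : R := 'D_v ('D_v u) x.

Definition direction_set (D : set V) : Prop :=
  [/\ exists s : seq V, (forall v, v \in s -> D v) /\ (span s = fullv)%VS,
      (forall d, D d -> D (- d)) & ~ D 0].

Definition grid_direction_set (DW : set V) : Prop :=
  direction_set DW /\ forall v, DW v -> forall i, v ord0 i \is a Num.int.

Definition is_width (DW : set V) (W : R) : Prop :=
  (forall v, DW v -> `|v| <= W) /\ exists2 v, DW v & `|v| = W.

Definition lambdaD (D : set V) (u : V -> R) (x : V) : R :=
  inf [set hess_quad u x v / (enorm v) ^+ 2 | v in D].

Definition Dh_vv (h : R) (v : V) (u : V -> R) (x : V) : R :=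
  (u (x + h *: v) - 2 * u x + u (x - h *: v)) / (h ^+ 2 * (enorm v) ^+ 2).

Definition lambdah (DW : set V) (h : R) (u : V -> R) (x : V) : R :=
  inf [set Dh_vv h v u x | v in DW].

Definition angle (w v : V) : R :=
  acos (dotp ((enorm w)^-1 *: w) ((enorm v)^-1 *: v)).

Definition dtheta (D DW : set V) : R :=
  sup [set inf [set angle w v | v in DW] | w in D].

End Defs.

(* Main.v *)
Require Import Defs.
From HB Require Import structures.
From mathcomp Require Import all_boot all_order all_algebra.
From mathcomp Require Import all_classical all_reals all_analysis.
From mathcomp Require Import ring lra.
Import Order.TTheory GRing.Theory Num.Theory.
Import numFieldNormedType.Exports.
Local Open Scope classical_set_scope.
Local Open Scope ring_scope.
Set Implicit Arguments. Unset Strict Implicit. Unset Printing Implicit Defensive.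

Section SA.
Variables (R : realType) (n : nat).
Local Notation V := 'rV[R]_n.
Local Notation iter := (@iter_dderiv R n).

Definition Csm (f : V -> R) := forall vs y, differentiable (iter vs f) y.

Lemma iter_rcons (vs : seq V) (w : V) (f : V -> R) : iter (rcons vs w) f = iter vs ('D_w f).
Proof. by rewrite /iter_dderiv foldr_rcons. Qed.

Lemma iter_cons (vs : seq V) (w : V) (f : V -> R) : iter (w :: vs) f = 'D_w (iter vs f).
Proof. by []. Qed.

Lemma Dlin (f : V -> R) (y : V) (k : R) (p q : V) : differentiable f y ->
  'D_(k *: p + q) f y = k * 'D_p f y + 'D_q f y.
Proof. by move=> df; rewrite !deriveE // linearD linearZ. Qed.

Lemma Dsum (f : V -> R) (y w : V) : differentiable f y ->
  'D_w f y = \sum_(i < n) w ord0 i * 'D_(delta_mx ord0 i) f y.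
Proof.
move=> df; rewrite deriveE // {1}(row_sum_delta w) linear_sum.
by apply: eq_bigr => i _; rewrite linearZ deriveE.
Qed.

Lemma iter_sumfun (vs : seq V) (F : 'I_n -> V -> R) (c : 'I_n -> R) :
  (forall i ws y, differentiable (iter ws (F i)) y) ->
  forall y, iter vs (fun z => \sum_(i < n) c i * F i z) y
          = \sum_(i < n) c i * iter vs (F i) y.
Proof.
move=> hF; elim: vs => [//|v vs IH] y.
rewrite iter_cons.
have -> : iter vs (fun z => \sum_(i < n) c i * F i z) =
   \sum_(i < n) (c i \*: iter vs (F i)).
  by apply/funext => z; rewrite IH fct_sumE.
rewrite derive_sum; last first.
  by move=> i; apply: derivableZ; apply: diff_derivable.
apply: eq_bigr => i _; rewrite deriveZ //; exact: diff_derivable.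
Qed.

Lemma iter_linfun (vs : seq V) (F G : V -> R) (k : R) :
  Csm F -> Csm G ->
  forall y, iter vs (fun z => k * F z + G z) y = k * iter vs F y + iter vs G y.
Proof.
move=> hF hG; elim: vs => [//|v vs IH] y.
rewrite iter_cons.
have -> : iter vs (fun z => k * F z + G z) = (k \*: iter vs F) + iter vs G.
  by apply/funext => z; rewrite IH.
rewrite deriveD; last 2 first.
- by apply: derivableZ; apply: diff_derivable.
- exact: diff_derivable.
rewrite deriveZ //; exact: diff_derivable.
Qed.

Lemma Csm_D (f : V -> R) (w : V) : Csm f -> Csm ('D_w f).
Proof. by move=> hf vs y; rewrite -iter_rcons. Qed.


Lemma entry_le_norm (w : V) i : `|w ord0 i| <= `|w|.
Proof.
have -> : `|w| = mx_norm w by [].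
rewrite mx_normrE; exact: (le_bigmax _ (fun ij : 'I_1 * 'I_n => `|w ij.1 ij.2|) (ord0, i)).
Qed.

Local Notation ebas := (fun i : 'I_n => delta_mx (ord0 : 'I_1) i : V).

Lemma iter_bound (vs : seq V) : forall (f : V -> R) (M : R) (y : V), Csm f ->
  (forall es : seq 'I_n, size es = size vs -> `|iter (map ebas es) f y| <= M) ->
  `|iter vs f y| <= M * \prod_(w <- vs) (n%:R * `|w|).
Proof.
elim/last_ind: vs => [|vs w IH] f M y hf hM.
  by rewrite big_nil mulr1; apply: (hM [::]).
rewrite iter_rcons.
have -> : 'D_w f = (fun z => \sum_(i < n) w ord0 i * 'D_(ebas i) f z).
  by apply/funext => z; rewrite (@Dsum f z w (hf [::] z)).
rewrite iter_sumfun; last by move=> i; apply: Csm_D.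
rewrite big_rcons /=.
apply: (le_trans (ler_norm_sum _ _ _)).
have H : forall i : 'I_n, `|w ord0 i * iter vs ('D_(ebas i) f) y|
        <= `|w| * (M * \prod_(w0 <- vs) (n%:R * `|w0|)).
  move=> i; rewrite normrM; apply: ler_pM => //.
    exact: entry_le_norm.
  apply: IH; first exact: Csm_D.
  move=> es hes; rewrite -iter_rcons -map_rcons; apply: hM.
  by rewrite size_rcons hes size_rcons.
apply: (le_trans (ler_sum _ (fun i _ => H i))).
rewrite sumr_const card_ord -[X in X <= _]mulr_natr.
rewrite le_eqVlt; apply/orP; left; apply/eqP; ring.
Qed.

End SA.

Section SB.
Variables (R : realType) (n : nat).
Local Notation V := 'rV[R]_n.

Lemma Dline (G : V -> R) (a w : V) (t : R) : differentiable G (a + t *: w) ->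
  is_derive t 1 (fun s => G (a + s *: w)) ('D_w G (a + t *: w)).
Proof.
move=> dG.
have E : (fun h : R => h^-1 *: (((fun s => G (a + s *: w)) \o shift t) (h *: 1)
            - G (a + t *: w))) =
         (fun h : R => h^-1 *: ((G \o shift (a + t *: w)) (h *: w) - G (a + t *: w))).
  apply/funext => h /=; congr (_ *: (G _ - _)).
  by rewrite /shift /= scalerDl -[h *: 1]/(h * 1) mulr1; rewrite addrCA addrA.
apply: DeriveDef.
  by rewrite /derivable E; exact: diff_derivable.
by rewrite /derive E.
Qed.

Lemma step (g g' : R -> R) (c : R) (k : nat) (h : R) :
  (forall s : R, is_derive s (1 : R) g (g' s)) -> g 0 = 0 ->
  (forall s, 0 <= s <= h -> `|g' s| <= c * s ^+ k) ->
  forall t, 0 <= t <= h -> `|g t| <= c * t ^+ k.+1.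
Proof.
move=> dg g0 hb t /andP[t0 th].
case: (eqVneq t 0) => [->|tn0].
  by rewrite g0 normr0 expr0n mulr0.
have tp : 0 < t by rewrite lt_neqAle eq_sym tn0.
have [x xin E] := @MVT R g g' 0 t tp (fun x _ => dg x)
  (derivable_within_continuous (fun x _ => @ex_derive _ _ _ _ _ _ _ (dg x))).
move: xin; rewrite in_itv /= => /andP[x0 xt].
rewrite -[g t]subr0 -g0 E subr0 normrM (gtr0_norm tp) exprS [t * _]mulrC mulrA.
apply: ler_wpM2r; first exact: ltW.
have hx : 0 <= x <= h by rewrite (ltW x0) /= (le_trans (ltW xt) th).
have c0 : 0 <= c.
  have := le_trans (normr_ge0 _) (hb x hx).
  by rewrite pmulr_lge0 // exprn_gt0.
apply: (le_trans (hb x hx)).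
apply: ler_wpM2l => //; apply: lerXn2r; rewrite ?nnegrE ?(ltW x0) //; exact: ltW.
Qed.

End SB.

Section SC.
Variables (R : realType) (n : nat).
Local Notation V := 'rV[R]_n.
Local Notation iter := (@iter_dderiv R n).

Lemma isdB (f g : R -> R) s df dg : is_derive s (1:R) f df -> is_derive s (1:R) g dg ->
 is_derive s (1:R) (fun z => f z - g z) (df - dg).
Proof. move=> ? ?; exact: is_deriveB. Qed.

Lemma isdD (f g : R -> R) s df dg : is_derive s (1:R) f df -> is_derive s (1:R) g dg ->
 is_derive s (1:R) (fun z => f z + g z) (df + dg).
Proof. move=> ? ?; exact: is_deriveD. Qed.

Lemma isd_cst (c : R) s : is_derive s (1:R) (fun _ : R => c) 0.
Proof. exact: is_derive_cst. Qed.

Lemma isd_lin (c : R) s : is_derive s (1:R) (fun z => c * z) c.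
Proof.
have := is_deriveZ c (is_derive_id s (1:R)).
move=> H; rewrite (_ : (fun z : R => c * z) = c \*: (@id R)); last by apply/funext.
apply: (is_derive_eq H); exact: mulr1.
Qed.

Lemma isd_sq (c : R) s : is_derive s (1:R) (fun z => c * z ^+ 2) (c * (2 * s)).
Proof.
have := is_deriveZ c (is_deriveX 2 (is_derive_id s (1:R))).
move=> H; rewrite (_ : (fun z : R => c * z ^+ 2) = c \*: ((@id R) ^+ 2)); last first.
  by apply/funext => z /=; rewrite -[c *: _]/(c * _) /=; congr (_ * _); rewrite /GRing.exp /= ?mulr1.
apply: (is_derive_eq H); by rewrite -[_ *: _]/(_ * _) -[_%:A]/(_ * 1) mulr1 expr1.
Qed.

Variables (u : V -> R) (hu : smooth u) (x v : V).

Definition E k (s : R) := iter (nseq k v) u (x + s *: v).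
Definition F k (s : R) := iter (nseq k v) u (x + s *: - v).

Lemma hu' : Csm u. Proof. exact: hu. Qed.

Lemma E' k s : is_derive s (1:R) (E k) (E k.+1 s).
Proof. exact: (Dline (hu (nseq k v) _)). Qed.

Lemma F' k s : is_derive s (1:R) (F k) (- F k.+1 s).
Proof.
apply: is_derive_eq; first exact: (Dline (hu (nseq k v) _)).
by rewrite /F /= !deriveE ?linearN //; apply: hu.
Qed.

Lemma FE k s : F k s = E k (- s).
Proof. by rewrite /F /E scalerN scaleNr. Qed.

Definition p3 s := E 3 s - F 3 s.
Definition p2 s := E 2 s + F 2 s - 2 * E 2 0.
Definition p1 s := E 1 s - F 1 s - (2 * E 2 0) * s.
Definition p0 s := E 0 s + F 0 s - 2 * E 0 0 - E 2 0 * s ^+ 2.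

Lemma p3' s : is_derive s (1:R) p3 (E 4 s + F 4 s).
Proof. apply: is_derive_eq; first exact: isdB (E' 3 s) (F' 3 s). by rewrite opprK. Qed.

Lemma p2' s : is_derive s (1:R) p2 (p3 s).
Proof.
apply: is_derive_eq; first exact: isdB (isdD (E' 2 s) (F' 2 s)) (isd_cst _ s).
by rewrite /p3 subr0.
Qed.

Lemma p1' s : is_derive s (1:R) p1 (p2 s).
Proof.
apply: is_derive_eq; first exact: isdB (isdB (E' 1 s) (F' 1 s)) (isd_lin _ s).
by rewrite /p2 opprK.
Qed.

Lemma p0' s : is_derive s (1:R) p0 (p1 s).
Proof.
apply: is_derive_eq.
  exact: isdB (isdB (isdD (E' 0 s) (F' 0 s)) (isd_cst _ s)) (isd_sq _ s).
by rewrite /p1 subr0; ring.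
Qed.

Lemma F0 k : F k 0 = E k 0.
Proof. by rewrite FE oppr0. Qed.

Lemma taylor4 (h K : R) : 0 <= h ->
  (forall s, `|s| <= h -> `|E 4 s| <= K) ->
  `|u (x + h *: v) - 2 * u x + u (x - h *: v) - h ^+ 2 * hess_quad u x v|
    <= (K + K) * h ^+ 4.
Proof.
move=> h0 hK.
have b3 : forall s, 0 <= s <= h -> `|E 4 s + F 4 s| <= (K + K) * s ^+ 0.
  move=> s /andP[s0 sh]; rewrite expr0 mulr1 FE.
  apply: (le_trans (ler_normD _ _)); apply: lerD; apply: hK.
    by rewrite ger0_norm.
  by rewrite normrN ger0_norm.
have z3 : p3 0 = 0 by rewrite /p3 F0 subrr.
have z2 : p2 0 = 0 by rewrite /p2 F0; ring.
have z1 : p1 0 = 0 by rewrite /p1 F0; ring.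
have z0 : p0 0 = 0 by rewrite /p0 F0; ring.
have c3 := step p3' z3 b3.
have c2 := step p2' z2 c3.
have c1 := step p1' z1 c2.
have c0 := step p0' z0 c1.
have := c0 h; rewrite h0 lexx => /(_ isT).
have -> : p0 h = u (x + h *: v) - 2 * u x + u (x - h *: v) - h ^+ 2 * hess_quad u x v.
  rewrite /p0 /E /F /= scale0r addr0 scalerN.
  rewrite /hess_quad /iter_dderiv /=; ring.
by [].
Qed.

End SC.

Section SD.
Variables (R : realType) (n : nat).
Local Notation V := 'rV[R]_n.
Local Notation dotp := (@dotp R n).
Local Notation enorm := (@enorm R n).

Lemma dotp_ge0 (p : V) : 0 <= dotp p p.
Proof. by apply: sumr_ge0 => i _; rewrite -expr2 sqr_ge0. Qed.

Lemma enorm_ge0 (p : V) : 0 <= enorm p.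
Proof. exact: sqrtr_ge0. Qed.

Lemma enorm_sq (p : V) : enorm p ^+ 2 = dotp p p.
Proof. by rewrite /enorm sqr_sqrtr // dotp_ge0. Qed.

Lemma entry_le_enorm (p : V) i : `|p ord0 i| <= enorm p.
Proof.
rewrite /enorm -(sqrtr_sqr (p ord0 i)); apply: ler_wsqrtr.
rewrite /Defs.dotp (bigD1 i) //= -expr2 lerDl.
by apply: sumr_ge0 => j _; rewrite -expr2 sqr_ge0.
Qed.

Lemma norm_le_enorm (p : V) : `|p| <= enorm p.
Proof.
case: (eqVneq `|p| 0) => [->|pn]; first exact: enorm_ge0.
have [[i j] /= Hij] := @mx_norm_neq0 R 1 n p pn.
rewrite (_ : `|p| = `|p i j|) //.
by rewrite (ord1 i); exact: entry_le_enorm.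
Qed.

Lemma enorm_gt0 (p : V) : p != 0 -> 0 < enorm p.
Proof.
move=> p0; apply: (lt_le_trans _ (norm_le_enorm p)); by rewrite normr_gt0.
Qed.

Lemma dotpZl k (p q : V) : dotp (k *: p) q = k * dotp p q.
Proof. by rewrite /Defs.dotp mulr_sumr; apply: eq_bigr => i _; rewrite mxE mulrA. Qed.

Lemma dotpC (p q : V) : dotp p q = dotp q p.
Proof. by apply: eq_bigr => i _; rewrite mulrC. Qed.

Lemma dotpZr k (p q : V) : dotp p (k *: q) = k * dotp p q.
Proof. by rewrite dotpC dotpZl dotpC. Qed.

Lemma dotpBB (p q : V) : dotp (p - q) (p - q) = dotp p p - 2 * dotp p q + dotp q q.
Proof.
rewrite /Defs.dotp mulr_sumr -sumrB -big_split /=; apply: eq_bigr => i _.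
by rewrite !mxE; ring.
Qed.

Lemma unit_dotp (w : V) : w != 0 -> dotp ((enorm w)^-1 *: w) ((enorm w)^-1 *: w) = 1.
Proof.
move=> w0; have e0 := enorm_gt0 w0.
rewrite dotpZl dotpZr -enorm_sq; field; exact: lt0r_neq0.
Qed.

Lemma dot_bound (a b : V) : dotp a a = 1 -> dotp b b = 1 -> -1 <= dotp a b <= 1.
Proof.
move=> ha hb.
have H1 : 2 * dotp a b <= dotp a a + dotp b b.
  rewrite /Defs.dotp mulr_sumr -big_split /=; apply: ler_sum => i _.
  by have := sqr_ge0 (a ord0 i - b ord0 i); rewrite -!expr2; lra.
have H2 : - (2 * dotp a b) <= dotp a a + dotp b b.
  rewrite /Defs.dotp mulr_sumr -sumrN -big_split /=; apply: ler_sum => i _.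
  by have := sqr_ge0 (a ord0 i + b ord0 i); rewrite -!expr2; lra.
rewrite ha hb in H1 H2; apply/andP; split; lra.
Qed.

Lemma abs_sin_le (t : R) : 0 <= t -> `|sin t| <= t.
Proof.
move=> t0.
have := @step R (@sin R) (@cos R) 1 0 t (fun s => @is_derive_sin R s) (@sin0 R).
move=> /(_ _ t); rewrite mul1r expr1; apply.
  by move=> s _; rewrite expr0 mulr1; apply: cos_max.
by rewrite t0 lexx.
Qed.

Lemma one_minus_cos (t : R) : 0 <= t -> 1 - cos t <= t ^+ 2.
Proof.
move=> t0.
have dg : forall s : R, is_derive s (1:R) (fun z => 1 - cos z) (sin s).
  move=> s; have H := isdB (isd_cst (1:R) s) (@is_derive_cos R s); apply: (is_derive_eq H).
  by rewrite sub0r opprK.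
have := @step R (fun z => 1 - cos z) sin 1 1 t dg.
rewrite cos0 subrr => /(_ erefl _ t); rewrite mul1r => H.
apply: le_trans (ler_norm _) (H _ _); last by rewrite t0 lexx.
by move=> s /andP[s0 _]; rewrite mul1r expr1; apply: abs_sin_le.
Qed.

End SD.

Section SE.
Variables (R : realType) (n : nat).
Local Notation V := 'rV[R]_n.
Local Notation dotp := (@dotp R n).
Local Notation enorm := (@enorm R n).
Local Notation iter := (@iter_dderiv R n).
Local Notation ebas := (fun i : 'I_n => delta_mx (ord0 : 'I_1) i : V).

Lemma le_tuple_sum (f : V -> R) y k (es : seq 'I_n) : size es = k ->
  `|iter (map ebas es) f y| <= \sum_(t : k.-tuple 'I_n) `|iter (map ebas t) f y|.
Proof.
move=> hs; pose t := Tuple (introT eqP hs).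
rewrite (bigD1 t) //= lerDl; exact: sumr_ge0.
Qed.

Variables (u : V -> R) (hu : smooth u) (x : V).

Definition Bf (p q : V) := iter [:: p; q] u x.

Lemma BZl k p q : Bf (k *: p) q = k * Bf p q.
Proof. by rewrite /Bf !iter_cons !deriveE ?linearZ //; apply: (hu [:: q]). Qed.

Lemma BBl p1 p2 q : Bf (p1 - p2) q = Bf p1 q - Bf p2 q.
Proof. by rewrite /Bf !iter_cons !deriveE ?linearB //; apply: (hu [:: q]). Qed.

Lemma BZr k p q : Bf p (k *: q) = k * Bf p q.
Proof.
rewrite /Bf !iter_cons /iter_dderiv /=.
have -> : 'D_(k *: q) u = k \*: 'D_q u.
  by apply/funext => z; rewrite /= !deriveE ?linearZ //; apply: (hu [::]).
rewrite deriveZ //; apply: diff_derivable; exact: (hu [:: q]).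
Qed.

Lemma BBr p q1 q2 : Bf p (q1 - q2) = Bf p q1 - Bf p q2.
Proof.
rewrite /Bf.
have E1 : 'D_(q1 - q2) u = (fun z => (-1) * 'D_q2 u z + 'D_q1 u z).
  apply/funext => z.
  rewrite /= !deriveE ?linearB //; try apply: (hu [::]).
  by rewrite mulN1r addrC.
have -> : iter [:: p; q1 - q2] u = iter [:: p] ('D_(q1 - q2) u) by [].
rewrite E1 iter_linfun; [|exact: Csm_D|exact: Csm_D].
by rewrite mulN1r addrC.
Qed.

Definition M2 := \sum_(t : 2.-tuple 'I_n) `|iter (map ebas t) u x|.

Lemma M2_ge0 : 0 <= M2.
Proof. by apply: sumr_ge0. Qed.

Lemma Bbound p q : `|Bf p q| <= M2 * n%:R ^+ 2 * (enorm p * enorm q).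
Proof.
have := @iter_bound R n [:: p; q] u M2 x hu.
rewrite !big_cons big_nil mulr1 => H.
apply: le_trans (H _) _.
  by move=> es hs; apply: le_tuple_sum.
have h1 := norm_le_enorm p; have h2 := norm_le_enorm q.
have h3 : 0 <= `|p| by []. have h4 : 0 <= `|q| by [].
have h5 : 0 <= n%:R :> R by [].
have h6 := M2_ge0.
have h7 : `|p| * `|q| <= enorm p * enorm q by apply: ler_pM.
have -> : M2 * (n%:R * `|p| * (n%:R * `|q|)) = (M2 * n%:R ^+ 2) * (`|p| * `|q|) by ring.
apply: ler_pM => //; rewrite ?mulr_ge0 // ?exprn_ge0 //.
Qed.

Definition qf (w : V) := hess_quad u x w / enorm w ^+ 2.

Lemma qfE w : w != 0 -> qf w = Bf ((enorm w)^-1 *: w) ((enorm w)^-1 *: w).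
Proof.
move=> w0; have e0 := enorm_gt0 w0.
rewrite BZl BZr /qf /hess_quad /Bf /iter_dderiv /=.
by rewrite mulrA -expr2 exprVn mulrC.
Qed.

Lemma qf_bound w : w != 0 -> `|qf w| <= M2 * n%:R ^+ 2.
Proof.
move=> w0; rewrite qfE //; apply: le_trans (Bbound _ _) _.
rewrite -expr2 enorm_sq unit_dotp // mulr1 //.
Qed.

Lemma angle_lemma w v : w != 0 -> v != 0 ->
  `|qf w - qf v| <= 4 * (M2 * n%:R ^+ 2) * angle w v.
Proof.
move=> w0 v0; rewrite (qfE w0) (qfE v0).
set a := _ *: w; set b := _ *: v.
have ha : dotp a a = 1 by apply: unit_dotp.
have hb : dotp b b = 1 by apply: unit_dotp.
have ea : enorm a = 1 by rewrite /Defs.enorm ha sqrtr1.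
have eb : enorm b = 1 by rewrite /Defs.enorm hb sqrtr1.
have cB := dot_bound ha hb.
set c := dotp a b in cB.
have -> : angle w v = acos c by [].
set th := acos c.
have th0 : 0 <= th by apply: acos_ge0.
have cth : cos th = c by apply: acosK; rewrite in_itv /=.
have -> : Bf a a - Bf b b = Bf (a - b) a + Bf b (a - b).
  by rewrite BBl BBr addrA subrK.
set K := M2 * n%:R ^+ 2.
have K0 : 0 <= K by rewrite mulr_ge0 ?M2_ge0 // exprn_ge0.
have eab : enorm (a - b) <= 2 * th.
  have th2 : 0 <= 2 * th by rewrite mulr_ge0.
  rewrite -[2 * th](ger0_norm th2) -sqrtr_sqr /Defs.enorm; apply: ler_wsqrtr.
  rewrite dotpBB ha hb -/c -cth (_ : (2 * th) ^+ 2 = 4 * th ^+ 2); last by rewrite exprMn -natrX.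
  have := one_minus_cos th0; lra.
apply: le_trans (ler_normD _ _) _.
apply: le_trans (lerD (Bbound _ _) (Bbound _ _)) _.
rewrite -/K ea eb mulr1 mul1r -mulrDr.
have -> : 4 * K * th = K * (2 * th + 2 * th) by ring.
apply: ler_wpM2l => //; exact: lerD.
Qed.

End SE.

Section SF.
Variables (R : realType) (n : nat).
Local Notation V := 'rV[R]_n.
Local Notation dotp := (@dotp R n).
Local Notation enorm := (@enorm R n).
Local Notation iter := (@iter_dderiv R n).
Local Notation ebas := (fun i : 'I_n => delta_mx (ord0 : 'I_1) i : V).

Variables (u : V -> R) (hu : smooth u) (x : V).

Lemma nbhd4 : exists2 r : R, 0 < r & exists M4 : R, 0 <= M4 /\
  forall (y : V) (es : seq 'I_n), `|x - y| < r -> size es = 4 ->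
    `|iter (map ebas es) u y| <= M4.
Proof.
pose f (t : 4.-tuple 'I_n) := iter (map ebas t) u.
have : \forall y \near x, forall t, `|f t x - f t y| < 1.
  apply: (@filter_forall _ _ _ (nbhs x) _) => t.
  by have /cvgr_dist_lt/(_ 1 ltr01) := differentiable_continuous (hu (map ebas t) x).
move=> /nbhs_ballP [r r0 hr].
exists r => //.
exists (\sum_(t : 4.-tuple 'I_n) (`|f t x| + 1)); split.
  by apply: sumr_ge0 => t _; rewrite addr_ge0.
move=> y es hy hs.
pose t := Tuple (introT eqP hs).
have hb : `|f t x - f t y| < 1.
  by apply: (hr y); rewrite -ball_normE.
apply: le_trans (_ : `|f t x| + 1 <= _).
  have : `|f t y| <= `|f t x| + `|f t x - f t y|.
    rewrite {1}(_ : f t y = f t x - (f t x - f t y)); last by rewrite opprB addrC subrK.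
    exact: ler_normB.
  by move=> H; apply: (le_trans H); rewrite lerD2l ltW.
rewrite (bigD1 t) //= lerDl; apply: sumr_ge0 => i _; exact: addr_ge0.
Qed.

Lemma dh_err (r M4 : R) :
  (forall (y : V) (es : seq 'I_n), `|x - y| < r -> size es = 4 ->
    `|iter (map ebas es) u y| <= M4) -> 0 <= M4 ->
  forall (v : V) (h W : R), v != 0 -> 0 < h -> `|v| <= W -> W * h < r ->
  `|Dh_vv h v u x - qf u x v| <= ((M4 + M4) * n%:R ^+ 4) * (W * h) ^+ 2.
Proof.
move=> HM M40 v h W v0 h0 vW Wr.
have W0 : 0 <= W by apply: le_trans vW.
set K := M4 * (n%:R * `|v| * (n%:R * `|v| * (n%:R * `|v| * (n%:R * `|v|)))).
have hK : forall s, `|s| <= h -> `|E u x v 4 s| <= K.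
  move=> s hs.
  have := @iter_bound R n (nseq 4 v) u M4 (x + s *: v) hu.
  rewrite /= !big_cons big_nil mulr1 => H; apply: H.
  move=> es hes; apply: HM; last by rewrite hes.
  rewrite opprD addNKr normrN normrZ.
  apply: le_lt_trans Wr; rewrite mulrC; apply: ler_pM => //.
have T := @taylor4 R n u hu x v h K (ltW h0) hK.
have e0 := enorm_gt0 v0.
have EQ : Dh_vv h v u x - qf u x v =
  (u (x + h *: v) - 2 * u x + u (x - h *: v) - h ^+ 2 * hess_quad u x v)
    / (h ^+ 2 * enorm v ^+ 2).
  rewrite /Dh_vv /qf; field.
  by rewrite (lt0r_neq0 h0) (lt0r_neq0 e0).
rewrite EQ normrM normfV (ger0_norm (_ : 0 <= h ^+ 2 * enorm v ^+ 2)); last first.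
  by rewrite mulr_ge0 // exprn_ge0 // ltW.
rewrite ler_pdivrMr; last by rewrite mulr_gt0 // exprn_gt0.
apply: le_trans T _.
have hA : `|v| ^+ 2 * `|v| ^+ 2 <= W ^+ 2 * enorm v ^+ 2.
  apply: ler_pM; rewrite ?exprn_ge0 //.
    by rewrite !expr2; apply: ler_pM.
  by rewrite !expr2; apply: ler_pM => //; apply: norm_le_enorm.
have -> : (K + K) * h ^+ 4 = ((M4 + M4) * n%:R ^+ 4 * h ^+ 4) * (`|v| ^+ 2 * `|v| ^+ 2).
  by rewrite /K; ring.
have -> : (M4 + M4) * n%:R ^+ 4 * (W * h) ^+ 2 * (h ^+ 2 * enorm v ^+ 2)
   = ((M4 + M4) * n%:R ^+ 4 * h ^+ 4) * (W ^+ 2 * enorm v ^+ 2) by ring.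
apply: ler_wpM2l => //.
by rewrite !mulr_ge0 ?exprn_ge0 ?addr_ge0 // ltW.
Qed.

End SF.

Unset Implicit Arguments. Set Strict Implicit.

Theorem mainTheorem10 (R : realType) (n : nat) (u : 'rV[R]_n -> R)
    (hu : smooth u) (x : 'rV[R]_n) :
  exists C : R, exists delta : R, 0 < C /\ 0 < delta /\
  forall (D DW : set 'rV[R]_n) (W : R),
    direction_set D -> grid_direction_set DW -> DW `<=` D ->
    is_width DW W -> dtheta D DW < pi / 2 ->
    forall h : R, 0 < h -> W * h <= delta ->
    `| lambdah DW h u x - lambdaD D u x | <= C * ((W * h) ^+ 2 + dtheta D DW).
Proof.
have [r r0 [M4 [M40 HM4]]] := nbhd4 hu x.
set C1 := (M4 + M4) * n%:R ^+ 4.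
set K2 := M2 u x * n%:R ^+ 2.
set C2 := 4 * K2.
have C10 : 0 <= C1 by rewrite mulr_ge0 ?addr_ge0 ?exprn_ge0.
have K20 : 0 <= K2 by rewrite mulr_ge0 ?M2_ge0 ?exprn_ge0.
have C20 : 0 <= C2 by rewrite mulr_ge0.
exists (C1 + C2 + 1), (r / 2); split; first by rewrite ltr_wpDl ?addr_ge0.
split; first by rewrite divr_gt0.
move=> D DW W [_ _ D0] _ sub [hW [v0 DWv0 _]] _ h h0 hWh.
have Wr : W * h < r by apply: le_lt_trans hWh _; rewrite ltr_pdivrMr // ltr_pMr // ltr1n.
set eps := C1 * (W * h) ^+ 2.
have eps0 : 0 <= eps by rewrite /eps mulr_ge0 ?sqr_ge0.
have nz : forall w, D w -> w != 0 by move=> w Dw; apply/eqP => w0; apply: D0; rewrite -w0.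
have herr : forall v, DW v -> `|Dh_vv h v u x - qf u x v| <= eps.
  by move=> v DWv; apply: (@dh_err R n u hu x r M4 HM4 M40 v h W (nz _ (sub _ DWv)) h0 (hW _ DWv) Wr).
have hq : forall w, D w -> `|qf u x w| <= K2 by move=> w Dw; exact: (@qf_bound R n u hu x w (nz _ Dw)).
set Sd := [set hess_quad u x v / enorm v ^+ 2 | v in D].
set Sw := [set Dh_vv h v u x | v in DW].
have infD : has_inf Sd.
  split; first by exists (qf u x v0); exists v0 => //; exact: sub.
  exists (- K2) => y [w Dw <-]; have := hq w Dw; rewrite -/(qf u x w) ler_norml.
  by case/andP.
have infW : has_inf Sw.
  split; first by exists (Dh_vv h v0 u x); exists v0.
  exists (- K2 - eps) => y [v DWv <-].
  have := hq v (sub _ DWv); have := herr v DWv; rewrite !ler_norml.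
  move=> /andP[H1 _] /andP[H2 _]; lra.
have Qle : forall w, D w -> lambdaD D u x <= qf u x w.
  by move=> w Dw; apply: (ge_inf infD.2); exists w.
have Lle : forall v, DW v -> lambdah DW h u x <= Dh_vv h v u x.
  by move=> v DWv; apply: (ge_inf infW.2); exists v.
have low : lambdaD D u x - eps <= lambdah DW h u x.
  apply: lb_le_inf; first exact: infW.1.
  move=> y [v DWv <-]; have := Qle v (sub _ DWv); have := herr v DWv.
  rewrite ler_norml => /andP[H1 _]; lra.
have angB : forall w v, D w -> DW v -> 0 <= angle w v <= pi.
  move=> w v Dw DWv.
  have hc := dot_bound (unit_dotp (nz _ Dw)) (unit_dotp (nz _ (sub _ DWv))).
  by rewrite /angle acos_ge0 // acos_lepi.
have infA : forall w, D w -> has_inf [set angle w v | v in DW].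
  move=> w Dw; split; first by exists (angle w v0); exists v0.
  by exists 0 => y [v DWv <-]; have /andP[] := angB w v Dw DWv.
have infA_le : forall w, D w -> inf [set angle w v | v in DW] <= pi.
  move=> w Dw; apply: le_trans (_ : angle w v0 <= pi).
    by apply: (ge_inf (infA w Dw).2); exists v0.
  by have /andP[] := angB w v0 Dw DWv0.
have supS : has_sup [set inf [set angle w v | v in DW] | w in D].
  split; first by exists (inf [set angle v0 v | v in DW]); exists v0 => //; exact: sub.
  by exists pi => y [w Dw <-]; apply: infA_le.
have dle : forall w, D w -> inf [set angle w v | v in DW] <= dtheta D DW.
  by move=> w Dw; apply: (sup_upper_bound supS); exists w.
have dt0 : 0 <= dtheta D DW.
  apply: le_trans (dle v0 (sub _ DWv0)).
  apply: lb_le_inf; first exact: (infA v0 (sub _ DWv0)).1.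
  by move=> y [v DWv <-]; have /andP[] := angB v0 v (sub _ DWv0) DWv.
have up : lambdah DW h u x <= lambdaD D u x + eps + C2 * dtheta D DW.
  apply/ler_addgt0Pr => e e0.
  set e' := e / (1 + C2).
  have e'0 : 0 < e' by rewrite divr_gt0 // ltr_pwDl.
  have [y [w Dw <-] hw] := inf_adherent e'0 infD.
  have [z [v DWv <-] hv] := inf_adherent e'0 (infA w Dw).
  have := dle w Dw => hd.
  have ha := angle_lemma hu x (nz _ Dw) (nz _ (sub _ DWv)).
  have hl := Lle v DWv; have he := herr v DWv.
  have hmul : C2 * angle w v <= C2 * (dtheta D DW + e').
    by apply: ler_wpM2l => //; apply: ltW; apply: lt_le_trans hv _; rewrite lerD2r.
  have ee : e' * (1 + C2) = e by rewrite /e' divfK // lt0r_neq0 // ltr_pwDl.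
  rewrite -/(qf u x w) in hw.
  have hw2 : qf u x w < lambdaD D u x + e' := hw.
  move: ha he hmul; rewrite -/C2 !ler_norml mulrDr => /andP[H1 _] /andP[_ H2] H3.
  have : e' + C2 * e' = e by rewrite -ee; ring.
  lra.
have main : `|lambdah DW h u x - lambdaD D u x| <= eps + C2 * dtheta D DW.
  rewrite ler_norml; apply/andP; split.
    have : 0 <= C2 * dtheta D DW by rewrite mulr_ge0.
    lra.
  lra.
apply: le_trans main _.
rewrite mulrDr; apply: lerD.
  apply: ler_wpM2r; first by rewrite sqr_ge0.
  lra.
apply: ler_wpM2r => //.
lra.
Qed.
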